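(* Let $S\subseteq\mathbb N^d$ be a good semigroup, $E\subsetneq S$ a proper good ideal, and $A=S\setminus E=\bigcup_{i=1}^NA_i$ its partition into levels. Suppose that for every $i=1,\dots,N-1$ and every $\boldsymbol\alpha\in A_i$ there exists $\boldsymbol\beta\in A_{i+1}$ with $\boldsymbol\beta\gg\boldsymbol\alpha$. Then $A$ is well-behaved.
   Context: Notation: on $\mathbb{Z}^d$, $\le$ componentwise, $\boldsymbol\alpha\ll\boldsymbol\beta$ (also written $\boldsymbol\beta\gg\boldsymbol\alpha$) means $\alpha_i<\beta_i$ for all $i$, $\boldsymbol\alpha\le\le\boldsymbol\beta$ means $\boldsymbol\alpha=\boldsymbol\beta$ or $\boldsymbol\alpha\ll\boldsymbol\beta$, $\wedge$ componentwise minimum, $I=\{1,\dots,d\}$. For $T\subseteq\mathbb Z^d$: $\Delta^T_F(\boldsymbol\alpha)=\{\boldsymbol\beta\in T:\beta_i=\alpha_i\ (i\in F),\ \beta_j>\alpha_j\ (j\notin F)\}$, $\widetilde\Delta^T_F(\boldsymbol\alpha)=\{\boldsymbol\beta\in T:\beta_i=\alpha_i\ (i\in F),\ \beta_j\ge\alpha_j\ (j\notin F)\}\setminus\{\boldsymbol\alpha\}$. A good semigroup is a submonoid $S$ of $(\mathbb{N}^d,+)$ closed under $\wedge$ (G1), satisfying (G2): if $\boldsymbol\alpha\neq\boldsymbol\beta\in S$ and $\alpha_i=\beta_i$, there is $\boldsymbol\epsilon\in S$ with $\epsilon_i>\alpha_i$, $\epsilon_j\ge\min\{\alpha_j,\beta_j\}$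 for $j\ne i$, with equality if $\alpha_j\ne\beta_j$; and (G3): $\boldsymbol c+\mathbb N^d\subseteq S$ for some $\boldsymbol c$. A good ideal is $E\subseteq S$ with $E+S\subseteq E$ satisfying (G1)–(G3). Complete infimum: $\boldsymbol\alpha\in B\subseteq S$ is a complete infimum of $\boldsymbol\beta^{(1)},\dots,\boldsymbol\beta^{(r)}\in B$ ($r\ge2$) if $\boldsymbol\beta^{(j)}\in\Delta^S_{F_j}(\boldsymbol\alpha)$ with $\emptyset\ne F_j\subsetneq I$, $\boldsymbol\beta^{(j)}\wedge\boldsymbol\beta^{(k)}=\boldsymbol\alpha$ ($j\ne k$), $\bigcap F_j=\emptyset$. Levels: $B^{(1)}$ = maximal elements of $A$ for $\le\le$, $C^{(1)}$ = those that are complete infima of $r$ elements of $B^{(1)}$ ($1<r\le d$), $D^{(1)}=B^{(1)}\setminus C^{(1)}$; inductively for $A\setminus\bigcup_{j<i}D^{(j)}$; $A=\bigsqcup_{i=1}^ND^{(i)}$, $A_i=D^{(N+1-i)}$. Well-behaved: $A$ is well-behaved if whenever $\boldsymbol\alpha\in S$ is a complete infimum (in $S$) of $\boldsymbol\beta^{(1)},\dots,\boldsymbol\beta^{(r)}$ with, for each $j$, $\boldsymbol\beta^{(j)}\in\widetilde\Delta^S_{G_j}(\boldsymbol\alpha)$ and $\widetilde\Delta^S_{G_j}(\boldsymbol\alpha)\subseteq A$, then $\boldsymbol\alpha\in E$. *)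

(* Defs.v *)
From mathcomp Require Import all_boot.
Set Implicit Arguments. Unset Strict Implicit. Unset Printing Implicit Defensive.

Definition vec (d : nat) := {ffun 'I_d -> nat}.
Definition vset (d : nat) := vec d -> Prop.

Section GoodSemigroups.
Variable d : nat.
Implicit Types (a b c e : vec d) (T S E A B R : vset d).

Definition vzero : vec d := [ffun _ => 0].
Definition vadd a b : vec d := [ffun i => a i + b i].
Definition vmeet a b : vec d := [ffun i => minn (a i) (b i)].

Definition vle a b := forall i, a i <= b i.
Definition vll a b := forall i, a i < b i.
Definition vlele a b := a = b \/ vll a b.

Definition G1 T := forall a b, T a -> T b -> T (vmeet a b).
Definition G2 T := forall a b, T a -> T b -> a <> b -> forall i, a i = b i ->
  exists e, T e /\ a i < e i /\
    forall j, j <> i -> minn (a j) (b j) <= e j /\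
                        (a j <> b j -> e j = minn (a j) (b j)).
Definition G3 T := exists c, forall g, vle c g -> T g.

Definition good_semigroup S :=
  [/\ S vzero, (forall a b, S a -> S b -> S (vadd a b)), G1 S, G2 S & G3 S].

Definition good_ideal S E :=
  [/\ (forall e, E e -> S e), (forall e s, E e -> S s -> E (vadd e s)),
      G1 E, G2 E & G3 E].

Definition Delta T (F : {set 'I_d}) a : vset d := fun b =>
  T b /\ (forall i, i \in F -> b i = a i) /\ (forall j, j \notin F -> a j < b j).
Definition Deltat T (F : {set 'I_d}) a : vset d := fun b =>
  [/\ T b, (forall i, i \in F -> b i = a i), (forall j, j \notin F -> a j <= b j)
    & b <> a].

Definition complete_infimum S B a {r : nat} (bs : 'I_r -> vec d) :=
  [/\ 2 <= r, B a, (forall j, B (bs j)) &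
    exists F : 'I_r -> {set 'I_d},
      [/\ (forall j, F j != set0 /\ F j != setT),
          (forall j, Delta S (F j) a (bs j)),
          (forall j k, j <> k -> vmeet (bs j) (bs k) = a) &
          \bigcap_(j < r) F j = set0]].

Definition lvB R : vset d := fun a => R a /\ ~ (exists b, R b /\ vlele a b /\ b <> a).
Definition lvC S R : vset d := fun a => lvB R a /\
  exists r (bs : 'I_r -> vec d), 1 < r <= d /\ complete_infimum S (lvB R) a bs.
Definition lvD S R : vset d := fun a => lvB R a /\ ~ lvC S R a.

Fixpoint lvRem S A (k : nat) : vset d :=
  match k with
  | 0 => A
  | k.+1 => fun a => lvRem S A k a /\ ~ lvD S (lvRem S A k) a
  end.

(* D^(k+1) (0-indexed here: Dlevel 0 = D^(1)) *)
Definition Dlevel S A k : vset d := lvD S (lvRem S A k).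

Definition num_levels S A N :=
  (forall a, ~ lvRem S A N a) /\ (forall k, k < N -> exists a, lvRem S A k a).

(* A_i = D^(N+1-i), for 1 <= i <= N *)
Definition Alevel S A N i : vset d := Dlevel S A (N - i).

Definition compl S E : vset d := fun a => S a /\ ~ E a.

Definition well_behaved S E :=
  forall a r (bs : 'I_r -> vec d) (G : 'I_r -> {set 'I_d}),
    S a -> complete_infimum S S a bs ->
    (forall j, Deltat S (G j) a (bs j)) ->
    (forall j b, Deltat S (G j) a b -> compl S E b) ->
    E a.

End GoodSemigroups.

(* Main.v *)
Require Import Defs.
From mathcomp Require Import all_boot zify.
From Stdlib Require Import Classical.
Set Implicit Arguments. Unset Strict Implicit. Unset Printing Implicit Defensive.

Lemma ci_to_lvC (d : nat) (S R : vset d) (x : vec d) (T : finType) (f : T -> vec d) :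
  0 < d ->
  lvB R x -> (forall t, lvB R (f t)) -> (forall t, S (f t)) ->
  (forall t, vle x (f t)) -> (forall t, exists i, f t i = x i) ->
  (forall t u, f t = f u \/ vmeet (f t) (f u) = x) ->
  (forall i, exists t, x i < f t i) -> lvC S R x.
Proof.
move=> d0 Bx Bf Sf lef eqf pw cov.
have [p Hp] := fin_all_exists cov.
pose q (i : 'I_d) := odflt (p i) [pick t | f t == f (p i)].
have fq i : f (q i) = f (p i).
  rewrite /q; case: pickP => [t /eqP //|H] /=; by have := H (p i); rewrite eqxx.
have qinj i i' : f (p i) = f (p i') -> q i = q i'.
  have Hs j : [pick t | f t == f (p j)] = Some (q j).
    rewrite /q; case: pickP => [t //|H]; by have := H (p j); rewrite eqxx.
  move=> E; have : Some (q i) = Some (q i') by rewrite -!Hs E.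
  by case.
pose J := [set q i | i : 'I_d].
pose r := #|J|.
pose bs (t : 'I_r) := f (enum_val t).
have inJ (t : 'I_r) : exists i, enum_val t = q i.
  have := enum_valP t; rewrite -/J => /imsetP [i _ ->]; by exists i.
have i0 : 'I_d := Ordinal d0.
split=> //.
exists r, bs; split.
  apply/andP; split.
    case: (ltnP 1 r) => // Hr.
    have qi0J : q i0 \in J by apply/imsetP; exists i0.
    have [i1 Hi1] := eqf (q i0).
    have qi1J : q i1 \in J by apply/imsetP; exists i1.
    have Heq : q i1 = q i0.
      have := card_le1_eqP Hr => /(_ (q i1) (q i0) qi1J qi0J) //.
    have := Hp i1; rewrite -fq Heq Hi1 ltnn //.
  by rewrite /r; apply: leq_trans (leq_imset_card _ _) _; rewrite card_ord.
split=> //.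
  - case: (ltnP 1 r) => // Hr.
    have qi0J : q i0 \in J by apply/imsetP; exists i0.
    have [i1 Hi1] := eqf (q i0).
    have qi1J : q i1 \in J by apply/imsetP; exists i1.
    have Heq : q i1 = q i0.
      have := card_le1_eqP Hr => /(_ (q i1) (q i0) qi1J qi0J) //.
    have := Hp i1; rewrite -fq Heq Hi1 ltnn //.
  - by move=> t; apply: Bf.
exists (fun t => [set i | bs t i == x i]); split.
  - move=> t; split.
      have [i Hi] := eqf (enum_val t).
      apply/set0Pn; exists i; rewrite inE /bs Hi //.
    have [i Hi] := inJ t.
    apply/negP => /eqP HT.
    have : i \in [set i | bs t i == x i] by rewrite HT inE.
    rewrite inE /bs Hi fq => /eqP E; have := Hp i; rewrite E ltnn //.
  - move=> t; split; first exact: Sf.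
    split=> [i|j]; rewrite inE; first by move/eqP.
    move=> Hj; have := lef (enum_val t) j; rewrite leq_eqVlt => /orP [/eqP E|//].
    by rewrite /bs E eqxx in Hj.
  - move=> j k jk.
    have [i Hi] := inJ j; have [i' Hi'] := inJ k.
    case: (pw (enum_val j) (enum_val k)) => // E.
    exfalso; apply: jk; apply: enum_val_inj.
    rewrite Hi Hi'; apply: qinj; rewrite -!fq -Hi -Hi' //.
  - apply/setP => i; rewrite in_set0; apply/negP => /bigcapP H.
    have qJ : q i \in J by apply/imsetP; exists i.
    have := H (enum_rank_in qJ (q i)) isT.
    rewrite inE /bs enum_rankK_in // fq => /eqP E.
    have := Hp i; rewrite E ltnn //.
Qed.

Section Levels.
Variables (d : nat) (S E : vset d) (N : nat).
Hypothesis d0 : 0 < d.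
Hypothesis HN : num_levels S (compl S E) N.
Hypothesis Hup : forall i, 1 <= i -> i <= N - 1 ->
     forall a, Alevel S (compl S E) N i a ->
       exists b, Alevel S (compl S E) N i.+1 b /\ vll a b.

Let A := compl S E.
Let R k := lvRem S A k.
Let L k := Dlevel S A k.

Lemma vll_neq (x y : vec d) : vll x y -> y <> x.
Proof. move=> H E0; have := H (Ordinal d0); by rewrite E0 ltnn. Qed.

Lemma Rmono k j x : k <= j -> R j x -> R k x.
Proof.
move=> kj; elim: j kj => [|j IH] kj.
  have -> : k = 0 by clear -kj; lia.
  done.
case: (ltnP k j.+1) => h.
  by move=> [Hj _]; apply: IH => //; clear -h; lia.
by have -> : k = j.+1 by clear -h kj; lia.
Qed.

Lemma R_A k x : R k x -> A x.
Proof. by move/(Rmono (leq0n k)). Qed.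

Lemma L_R k x : L k x -> R k x.
Proof. by case=> [[]]. Qed.

Lemma L_notR k x : L k x -> ~ R k.+1 x.
Proof. by move=> H [_ H']. Qed.

Lemma L_ltN k x : L k x -> k < N.
Proof.
move=> H; case: (ltnP k N) => // h.
exfalso; by case: HN => H1 _; apply: (H1 x); apply: (Rmono h); apply: L_R H.
Qed.

Lemma level_exists x : A x -> exists k, L k x.
Proof.
move=> Ax.
have H : forall n, R n x \/ exists k, L k x.
  elim=> [|n [Rn|//]]; first by left.
  - case: (classic (lvD S (R n) x)) => h; first by right; exists n.
    by left.
  - by right.
case: (H N) => // Rn; exfalso; by case: HN => H1 _; apply: (H1 x).
Qed.

Lemma L_unique k j x : L k x -> L j x -> k = j.
Proof.
move=> Hk Hj; case: (ltngtP k j) => // h.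
- by exfalso; apply: (L_notR Hk); apply: (Rmono h); apply: L_R Hj.
- by exfalso; apply: (L_notR Hj); apply: (Rmono h); apply: L_R Hk.
Qed.

Lemma F1 kx ky x y : L kx x -> L ky y -> vll x y -> ky < kx.
Proof.
move=> Hx Hy xy; case: (ltnP ky kx) => // h.
have Ry : R kx y := Rmono h (L_R Hy).
exfalso; case: Hx => [[_ Hmax] _]; apply: Hmax; exists y; split=> //; split.
  by right.
exact: vll_neq.
Qed.

Lemma up_exists k g : L k g -> 0 < k -> exists g', L k.-1 g' /\ vll g g'.
Proof.
move=> Hg k0.
have kN := L_ltN Hg.
have := Hup (i := N - k) _ _ (a := g).
rewrite /Alevel.
have -> : N - (N - k) = k by lia.
have -> : N - (N - k).+1 = k.-1 by lia.
move=> H; apply: H => //; lia.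
Qed.

Lemma Cempty k x : ~ lvC S (R k) x.
Proof.
move=> HC.
have HB : lvB (R k) x by case: HC.
have Rk1 : R k.+1 x.
  split; first by case: HB.
  by case=> _ []; exact: HC.
have [k' Hk'] := level_exists (R_A Rk1).
have kk : k < k'.
  case: (ltnP k k') => // h; exfalso.
  by apply: (L_notR Hk'); apply: (Rmono _ Rk1).
have [g [Hg xg]] := up_exists Hk' (leq_ltn_trans (leq0n _) kk).
have Rg : R k g by apply: (Rmono _ (L_R Hg)); lia.
case: HB => _; apply; exists g; split=> //; split; first by right.
exact: vll_neq.
Qed.

Lemma F2 kx ky x y : vle x y -> L kx x -> L ky y -> ky <= kx.
Proof.
move=> xy Hx Hy; case: (leqP ky kx) => // h; exfalso.
have [Ry ny] : R kx y /\ ~ lvD S (R kx) y by apply: (Rmono h (L_R Hy)).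
have nB : ~ lvB (R kx) y.
  move=> By; apply: ny; split=> //; exact: Cempty.
have [z [Rz [[E0|yz] zy]]] : exists z, R kx z /\ vlele y z /\ z <> y.
  apply: NNPP => H; apply: nB; split=> //.
  - by rewrite E0 in zy.
case: Hx => [[_ Hmax] _]; apply: Hmax; exists z; split=> //; split.
  right=> i; apply: leq_ltn_trans (xy i) (yz i).
apply: vll_neq => i; apply: leq_ltn_trans (xy i) (yz i).
Qed.

End Levels.

Section Core.
Variables (d : nat) (S : vset d) (R : vset d).
Hypothesis d0 : 0 < d.
Hypothesis HG2 : G2 S.
Hypothesis HG1 : G1 S.
Variable Lk : vset d.
Hypothesis LkB : forall y, Lk y -> lvB R y.
Hypothesis LkS : forall y, Lk y -> S y.
Hypothesis noC : forall x, ~ lvC S R x.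
Variables (c g : vec d).
Hypothesis Lc : Lk c.
Hypothesis Lg : Lk g.
Hypothesis cg : vle c g.
Variable i0 : 'I_d.
Hypothesis ci0 : c i0 < g i0.
Let Q := [set l | c l == g l].
Let bump (y : vec d) := [set l | c l < y l].
Let Cand s y := [/\ S y, vle c y, (forall j, j \notin Q -> y j = c j), c s < y s & Lk y].
Hypothesis LkBetween : forall z w, S z -> vle c z -> vle z w -> Lk w ->
  (forall j, j \notin Q -> w j = c j) -> Lk z.
Hypothesis Hcand : forall s, s \in Q -> exists y, Cand s y.

Lemma bumpQ s y : Cand s y -> bump y \subset Q.
Proof.
case=> _ _ H _ _; apply/subsetP => l; rewrite !inE => h.
case: (boolP (l \in Q)); first by rewrite inE.
move=> nl; have E := H l nl; by rewrite E ltnn in h.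
Qed.

Lemma shrink s l y z : Cand s y -> Cand l z -> z s = c s ->
  exists y', Cand s y' /\ bump y' \subset bump y :\: bump z.
Proof.
move=> [Sy cy yQ ys Ly] [Sz cz zQ zl Lz] zs.
have czne : c <> z by move=> E; rewrite -E ltnn in zl.
have [e [Se [cse He]]] := HG2 (LkS Lc) Sz czne (esym zs).
exists (vmeet y e); split; [split|].
- exact: HG1.
- move=> j; rewrite ffunE leq_min cy /=.
  case: (eqVneq j s) => [->|js]; first exact: ltnW.
  by have [+ _] := He j (elimN eqP js); rewrite (minn_idPl (cz j)).
- move=> j jQ; rewrite ffunE yQ //; apply/minn_idPl.
  case: (eqVneq j s) => [->|js]; first exact: ltnW.
  by have [+ _] := He j (elimN eqP js); rewrite (minn_idPl (cz j)).
- by rewrite ffunE leq_min ys.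
- apply: (LkBetween (w := y)) => //.
  + exact: HG1.
  + move=> j; rewrite ffunE leq_min cy /=.
    case: (eqVneq j s) => [->|js]; first exact: ltnW.
    by have [+ _] := He j (elimN eqP js); rewrite (minn_idPl (cz j)).
  + by move=> j; rewrite ffunE geq_minl.
- apply/subsetP => j; rewrite !inE ffunE leq_min => /andP [h1 h2].
  rewrite h1 andbT; apply/negP => h3.
  have js : j != s by apply/eqP => E; rewrite E zs ltnn in h3.
  have [_ h4] := He j (elimN eqP js).
  have : e j = c j.
    rewrite h4; first by apply/minn_idPl/ltnW.
    by move=> E; rewrite E ltnn in h3.
  by move=> E; rewrite E ltnn in h2.
Qed.

Let MinCand s y := Cand s y /\ forall y', Cand s y' -> #|bump y| <= #|bump y'|.

Lemma mincand_ex s : s \in Q -> exists y, MinCand s y.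
Proof.
move=> sQ; have [y Cy] := Hcand sQ.
suff H : forall n y, Cand s y -> #|bump y| <= n -> exists y0, MinCand s y0.
  exact: (H _ y Cy (leqnn _)).
elim=> [|n IH] y0 Cy0 hn.
  exists y0; split=> // y' _; by apply: leq_trans hn _.
case: (classic (exists y', Cand s y' /\ #|bump y'| < #|bump y0|)).
  move=> [y' [Cy' h]]; apply: (IH y' Cy'); rewrite -ltnS; exact: leq_trans h hn.
move=> H; exists y0; split=> // y' Cy'; rewrite leqNgt; apply/negP => h.
by apply: H; exists y'.
Qed.

Lemma not_bump_eq y t : vle c y -> t \notin bump y -> y t = c t.
Proof.
move=> cy; rewrite inE -leqNgt => h; apply/eqP; rewrite eqn_leq h cy //.
Qed.

Lemma subA s l y z : MinCand s y -> l \in bump y -> Cand l z -> s \in bump z.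
Proof.
move=> [Cy My] ly Cz; apply/negPn/negP => ns.
have zs : z s = c s by apply: not_bump_eq => //; case: Cz.
have [y' [Cy' sub]] := shrink Cy Cz zs.
have := My y' Cy'.
have lz : c l < z l by case: Cz.
have h1 : #|bump y'| <= #|bump y :\ l|.
  apply: subset_leq_card; apply: subset_trans sub _.
  apply/subsetP => j; rewrite !inE => /andP [h2 h3]; rewrite h3 andbT.
  by apply/eqP => E; rewrite E lz in h2.
have h2 := cardsD1 l (bump y); rewrite ly /= in h2.
rewrite h2 add1n => h3; have := leq_trans h3 h1; by rewrite ltnn.
Qed.

Section Inner.
Variable Y : 'I_d -> vec d.
Hypothesis HY : forall s, s \in Q -> MinCand s (Y s).

Lemma subB s l : s \in Q -> l \in bump (Y s) -> bump (Y s) \subset bump (Y l).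
Proof.
move=> sQ ls.
have lQ : l \in Q by apply: (subsetP (bumpQ (HY sQ).1)).
apply/subsetP => t ts; apply/negPn/negP => nt.
have Ylt : Y l t = c t by apply: not_bump_eq => //; case: (HY lQ).1.
have Cts : Cand t (Y s).
  by case: (HY sQ).1 => ????? ; split=> //; rewrite inE in ts.
have [y' [Cy' sub]] := shrink Cts (HY lQ).1 Ylt.
have sl : s \in bump (Y l) by apply: (subA (HY sQ) ls (HY lQ).1).
have sy' : s \in bump y' by apply: (subA (HY sQ) ts Cy').
have := subsetP sub s sy'; by rewrite inE sl.
Qed.

Lemma beq s l : s \in Q -> l \in bump (Y s) -> bump (Y l) = bump (Y s).
Proof.
move=> sQ ls.
have lQ : l \in Q by apply: (subsetP (bumpQ (HY sQ).1)).
have sl : s \in bump (Y l) by apply: (subA (HY sQ) ls (HY lQ).1).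
apply/eqP; rewrite eqEsubset (subB sQ ls) andbT; exact: subB.
Qed.

Let rep s := odflt s [pick l in bump (Y s)].
Let W s := Y (rep s).

Lemma rep_in s : s \in Q -> rep s \in bump (Y s).
Proof.
move=> sQ; rewrite /rep; case: pickP => [l //|H] /=.
rewrite inE; by case: (HY sQ).1.
Qed.

Lemma bumpW s : s \in Q -> bump (W s) = bump (Y s).
Proof. move=> sQ; exact: beq (rep_in sQ). Qed.

Lemma repQ s : s \in Q -> rep s \in Q.
Proof. move=> sQ; exact: (subsetP (bumpQ (HY sQ).1) _ (rep_in sQ)). Qed.

Lemma CandW s : s \in Q -> Cand s (W s).
Proof.
move=> sQ; have := (HY (repQ sQ)).1; case=> ?????; split=> //.
have : s \in bump (W s) by rewrite bumpW // inE; case: (HY sQ).1.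
by rewrite inE.
Qed.

Lemma W_eq s t l : s \in Q -> t \in Q -> l \in bump (Y s) -> l \in bump (Y t) -> W s = W t.
Proof.
move=> sQ tQ ls lt.
have E : bump (Y s) = bump (Y t) by rewrite -(beq sQ ls) (beq tQ lt).
have Hs u : u \in Q -> [pick l in bump (Y u)] = Some (rep u).
  move=> uQ; rewrite /rep; case: pickP => [l' //|H].
  have := H u; rewrite !inE; by case: (HY uQ).1 => _ _ _ ->.
have : Some (rep s) = Some (rep t) by rewrite -(Hs s sQ) -(Hs t tQ) E.
by rewrite /W => -[->].
Qed.

Lemma meet_c y z : vle c y -> vle c z -> (forall i, y i = c i \/ z i = c i) -> vmeet y z = c.
Proof.
move=> cy cz H; apply/ffunP => i; rewrite ffunE.
case: (H i) => ->; [exact: (minn_idPl (cz i))|exact: (minn_idPr (cy i))].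
Qed.

Hypothesis Qne : exists q, q \in Q.

Lemma core_false : False.
Proof.
have i0Q : i0 \notin Q by rewrite inE neq_ltn ci0.
pose f (o : option 'I_d) := if o is Some s then (if s \in Q then W s else g) else g.
have Sg : S g := LkS Lg.
have fge t : vle c (f t).
  case: t => [s|] //=; case: ifP => // sQ; by case: (CandW sQ).
apply: (noC (x := c)); apply: (@ci_to_lvC _ S R c _ f d0).
- exact: LkB.
- case=> [s|] /=; last exact: LkB; case: ifP => sQ; last exact: LkB.
  by apply: LkB; case: (CandW sQ).
- case=> [s|] //=; case: ifP => // sQ; by case: (CandW sQ).
- exact: fge.
- have [q qQ] := Qne.
  have gq : g q = c q by move: qQ; rewrite inE => /eqP.
  case=> [s|] /=; last by exists q.
  case: ifP => sQ; last by exists q.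
  by exists i0; case: (CandW sQ) => _ _ H _ _; apply: H.
- have gW s : s \in Q -> vmeet g (W s) = c.
    move=> sQ; apply: meet_c => //; first by case: (CandW sQ).
    move=> i; case: (boolP (i \in Q)) => iQ.
      by left; move: iQ; rewrite inE => /eqP.
    by right; case: (CandW sQ) => _ _ H _ _; apply: H.
  have WW s t : s \in Q -> t \in Q -> W s = W t \/ vmeet (W s) (W t) = c.
    move=> sQ tQ.
    case: (classic (exists l, l \in bump (Y s) /\ l \in bump (Y t))).
      by move=> [l [h1 h2]]; left; apply: (W_eq sQ tQ h1 h2).
    move=> H; right; apply: meet_c; [by case: (CandW sQ)|by case: (CandW tQ)|].
    move=> i; case: (boolP (i \in bump (W s))) => h1.
      case: (boolP (i \in bump (W t))) => h2.
        by exfalso; apply: H; exists i; rewrite -bumpW // -bumpW.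
      by right; apply: not_bump_eq => //; case: (CandW tQ).
    by left; apply: not_bump_eq => //; case: (CandW sQ).
  have gW' s : s \in Q -> vmeet (W s) g = c.
    move=> sQ; rewrite -(gW s sQ); apply/ffunP => i; by rewrite !ffunE minnC.
  case=> [s|]; case=> [t|] /=.
  + case: ifP => sQ; case: ifP => tQ; auto.
  + case: ifP => sQ; auto.
  + case: ifP => tQ; auto.
  + by left.
- move=> i; case: (boolP (i \in Q)) => iQ.
    exists (Some i); rewrite /= iQ.
    by case: (CandW iQ).
  exists None => /=; have := cg i; rewrite leq_eqVlt => /orP [/eqP E|//].
  by rewrite inE E eqxx in iQ.
Qed.

End Inner.

Lemma core_false2 : (exists q, q \in Q) -> False.
Proof.
move=> Qne.
have [Y' HY'] : exists Y' : 'I_d -> vec d, forall s, s \in Q -> MinCand s (Y' s).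
  apply: (@fin_all_exists _ (fun _ => vec d) (fun s y => s \in Q -> MinCand s y)) => s.
  case: (boolP (s \in Q)) => sQ.
    by have [y Hy] := mincand_ex sQ; exists y.
  by exists c.
exact: (core_false HY' Qne).
Qed.

End Core.

Lemma meet_gen (d : nat) (x y z : vec d) : vle x y -> vle x z ->
  (forall i, y i = x i \/ z i = x i) -> vmeet y z = x.
Proof.
move=> cy cz H; apply/ffunP => i; rewrite ffunE.
case: (H i) => ->; [exact: (minn_idPl (cz i))|exact: (minn_idPr (cy i))].
Qed.

Section Claim.
Variables (d : nat) (S E : vset d) (N : nat).
Hypothesis d0 : 0 < d.
Hypothesis HN : num_levels S (compl S E) N.
Hypothesis Hup : forall i, 1 <= i -> i <= N - 1 ->
     forall a, Alevel S (compl S E) N i a ->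
       exists b, Alevel S (compl S E) N i.+1 b /\ vll a b.
Hypothesis HG1 : G1 S.
Hypothesis HG2 : G2 S.
Variables (a : vec d) (F : {set 'I_d}) (i0 : 'I_d).
Hypothesis Fi0 : i0 \in F.
Hypothesis HM : forall y, Delta S F a y -> compl S E y.

Let L k := Dlevel S (compl S E) k.

Lemma claim_core k g c : L k g -> vll a g -> Delta S F a c -> vle c g -> L k c ->
  (forall s, c s = g s -> exists y, [/\ S y, vle c y, (forall j, c j != g j -> y j = c j),
      c s < y s & L k y]) -> False.
Proof.
move=> Lg ag [Sc [cF cnF]] cg Lc Hc.
have ci0 : c i0 < g i0 by rewrite cF //; exact: ag.
apply: (@core_false2 d S (lvRem S (compl S E) k) d0 HG2 HG1 (L k) _ _ _ c g Lc Lg cg i0 ci0).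
- by move=> y; case.
- move=> y Ly; have := @R_A _ _ _ k y (@L_R _ _ _ k y Ly).
  by case.
- exact: (Cempty d0 HN Hup).
- move=> z w Sz cz zw Lw wQ.
  have Az : compl S E z.
    apply: HM; split=> //; split.
      move=> i iF; apply/eqP; rewrite eqn_leq; apply/andP; split.
        have := zw i; rewrite wQ; first by rewrite cF.
        by rewrite inE neq_ltn cF // ag.
      by rewrite -cF //; exact: cz.
    by move=> j jF; apply: leq_trans (cnF j jF) (cz j).
  have [kz Lz] := level_exists HN Az.
  have h1 := F2 d0 HN Hup cz Lc Lz.
  have h2 := F2 d0 HN Hup zw Lz Lw.
  have -> : k = kz by apply/eqP; rewrite eqn_leq h1 h2.
  exact: Lz.
- move=> s; rewrite inE => /eqP /Hc [y [Sy cy yQ ys Ly]]; exists y; split=> //.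
  by move=> j; rewrite inE => /yQ.
- apply: NNPP => nQ.
  have cllg : vll c g.
    move=> i; have := cg i; rewrite leq_eqVlt => /orP [/eqP E0|//].
    by exfalso; apply: nQ; exists i; rewrite inE E0.
  have := F1 d0 Lc Lg cllg; by rewrite ltnn.
Qed.

Lemma cand_base k g c s : L k g -> vll a g -> Delta S F a c -> vle c g -> c s = g s ->
  exists e, [/\ S e, vle c e, (forall j, c j != g j -> e j = c j), c s < e s &
   (forall y, S y -> vle c y -> (forall j, c j != g j -> y j = c j) -> Delta S F a y)].
Proof.
move=> Lg ag Dc cg cs.
have [Sc [cF cnF]] := Dc.
have cne : c <> g by move=> E0; have := ag i0; rewrite -E0 cF // ltnn.
have Sg : S g by case: (@R_A _ _ _ _ g (@L_R _ _ _ _ g Lg)).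
have [e [Se [cse He]]] := HG2 Sc Sg cne cs.
exists e; split=> //.
- move=> j; case: (eqVneq j s) => [->|js]; first exact: ltnW.
  by have [+ _] := He j (elimN eqP js); rewrite (minn_idPl (cg j)).
- move=> j cj; have js : j <> s by move=> E0; rewrite E0 cs eqxx in cj.
  have [_ ->] := He j js; [apply/minn_idPl; exact: cg|by apply/eqP].
- move=> y Sy cy yQ; split=> //; split.
    move=> i iF; rewrite yQ ?cF // neq_ltn ag //.
  move=> j jF; exact: leq_trans (cnF j jF) (cy j).
Qed.

Lemma claim k : forall g c kc, L k g -> vll a g -> Delta S F a c -> vle c g -> L kc c -> k < kc.
Proof.
elim: k => [|k IH] g c kc Lg ag Dc cg Lc;
  have kkc := F2 d0 HN Hup cg Lc Lg;
  rewrite leq_eqVlt in kkc; case/orP: kkc => [/eqP Ek|//];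
  subst kc; exfalso; apply: (claim_core Lg ag Dc cg Lc) => s cs;
  have [e [Se ce eQ cse DM]] := cand_base Lg ag Dc cg cs.
- exists e; split=> //.
  have [ke Le] := level_exists HN (HM (DM e Se ce eQ)).
  have := F2 d0 HN Hup ce Lc Le; rewrite leqn0 => /eqP Eke.
  by rewrite -Eke.
- have [g' [Lg' gg']] := up_exists d0 HN Hup Lg (ltn0Sn k).
  pose y := vmeet e g'.
  have Sy : S y by apply: HG1 => //; case: (@R_A _ _ _ _ g' (@L_R _ _ _ _ g' Lg')).
  have cy : vle c y.
    move=> j; rewrite ffunE leq_min ce /=; exact: ltnW (leq_ltn_trans (cg j) (gg' j)).
  have yQ : forall j, c j != g j -> y j = c j.
    move=> j cj; rewrite ffunE eQ //; apply/minn_idPl; exact: ltnW (leq_ltn_trans (cg j) (gg' j)).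
  have Dy := DM y Sy cy yQ.
  have [ky Ly] := level_exists HN (HM Dy).
  have h1 : k < ky.
    apply: (IH g' y ky Lg' _ Dy _ Ly).
      by move=> j; apply: ltn_trans (ag j) (gg' j).
    by move=> j; rewrite ffunE geq_minr.
  have h2 := F2 d0 HN Hup cy Lc Ly.
  have Eky : ky = k.+1 by apply/eqP; rewrite eqn_leq h2 h1.
  exists y; split=> //; last by rewrite -Eky.
  rewrite ffunE leq_min cse /= cs; exact: gg'.
Qed.
End Claim.

Theorem proposition5p3 (d : nat) (S E : vset d) (N : nat) :
  good_semigroup S -> good_ideal S E ->
  (exists s, S s /\ ~ E s) ->
  num_levels S (compl S E) N ->
  (forall i, 1 <= i -> i <= N - 1 ->
     forall a, Alevel S (compl S E) N i a ->
       exists b, Alevel S (compl S E) N i.+1 b /\ vll a b) ->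
  well_behaved S E.
Proof.
move=> [S0 Sadd HG1 HG2 HG3] _ _ HN Hup.
move=> a r bs G Sa [r2 _ Sbs [F [Fne HD Hmeet Hcap]]] HDt HA.
apply: NNPP => nEa.
have Aa : compl S E a by [].
have r0 : 0 < r by apply: leq_trans r2.
pose j0 : 'I_r := Ordinal r0.
have [i0 i0F] : exists i, i \in F j0.
  by case: (Fne j0) => /set0Pn [i Hi] _; exists i.
have d0 : 0 < d by apply: leq_ltn_trans (leq0n _) (ltn_ord i0).
have notT j : exists i, i \notin F j.
  apply: NNPP => H; case: (Fne j) => _ /negP; apply; apply/eqP/setP => i.
  rewrite inE; apply/negPn/negP => ni; apply: H; by exists i.
have HM j : forall y, Delta S (F j) a y -> compl S E y.
  move=> y [Sy [yF ynF]]; apply: (HA j); split=> //.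
  - move=> i iG; have [_ bG _ _] := HDt j.
    apply: yF; apply/negPn/negP => niF.
    have [_ [_ h]] := HD j; have := h i niF; by rewrite bG // ltnn.
  - move=> l _; case: (boolP (l \in F j)) => h; first by rewrite yF.
    exact: ltnW (ynF l h).
  - move=> E0; have [i ni] := notT j; have := ynF i ni; by rewrite E0 ltnn.
have [K LK] := level_exists HN Aa.
have [cf Hcf] : exists cf : 'I_r -> vec d, forall j,
    Delta S (F j) a (cf j) /\ Dlevel S (compl S E) K (cf j).
  case: (posnP K) => [K0|Kpos].
    exists bs => j; split; first exact: HD.
    have [kj Lj] := level_exists HN (HM j _ (HD j)).
    have le : vle a (bs j).
      move=> l; have [_ [h1 h2]] := HD j; case: (boolP (l \in F j)) => h.
        by rewrite h1.
      exact: ltnW (h2 l h).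
    have := F2 d0 HN Hup le LK Lj; rewrite K0 leqn0 => /eqP E0; by rewrite -E0.
  have [g [Lg ag]] := up_exists d0 HN Hup LK Kpos.
  exists (fun j => vmeet (bs j) g) => j.
  have Sg : S g by case: (@R_A _ _ _ _ g (@L_R _ _ _ _ g Lg)).
  have [Sb [bF bnF]] := HD j.
  have Dj : Delta S (F j) a (vmeet (bs j) g).
    split; first exact: HG1 Sb Sg.
    split=> [i iF|l lF]; rewrite ffunE.
      by rewrite bF //; apply/minn_idPl/ltnW.
    by rewrite leq_min bnF // ag.
  split=> //.
  have [kj Lj] := level_exists HN (HM j _ Dj).
  have le : vle a (vmeet (bs j) g).
    move=> l; rewrite ffunE leq_min (ltnW (ag l)) andbT.
    case: (boolP (l \in F j)) => h; first by rewrite bF.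
    exact: ltnW (bnF l h).
  have h1 := F2 d0 HN Hup le LK Lj.
  have h2 : K.-1 < kj.
    have [ij ijF] : exists i, i \in F j by case: (Fne j) => /set0Pn [i Hi] _; exists i.
    apply: (claim d0 HN Hup HG1 HG2 (i0 := ij) (F := F j) (a := a) ijF (HM j) Lg ag Dj _ Lj).
    by move=> l; rewrite ffunE geq_minr.
  have -> : K = kj by move: h2; rewrite (prednK Kpos) => h2; apply/eqP; rewrite eqn_leq h1 h2.
  exact: Lj.
have Sr : forall j, S (cf j) by move=> j; case: (Hcf j) => [[]].
have lecf : forall j, vle a (cf j).
  move=> j l; have [[_ [h1 h2]] _] := Hcf j; case: (boolP (l \in F j)) => h.
    by rewrite h1.
  exact: ltnW (h2 l h).
apply: (Cempty d0 HN Hup (k := K) (x := a)).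
apply: (@ci_to_lvC _ S _ a _ cf d0).
- by case: LK.
- by move=> j; case: (Hcf j) => _ [].
- exact: Sr.
- exact: lecf.
- move=> j; have [ij ijF] : exists i, i \in F j by case: (Fne j) => /set0Pn [i Hi] _; exists i.
  exists ij; by case: (Hcf j) => [[_ [h _]] _]; apply: h.
- move=> j k; case: (eqVneq j k) => [->|jk]; first by left.
  right; apply: meet_gen; [exact: lecf|exact: lecf|] => i.
  have mi : minn (bs j i) (bs k i) = a i.
    by have := congr1 (fun v : vec d => v i) (Hmeet j k (elimN eqP jk)); rewrite /= ffunE.
  have [[_ [hj1 _]] _] := Hcf j; have [[_ [hk1 _]] _] := Hcf k.
  have [_ [bj1 bj2]] := HD j; have [_ [bk1 bk2]] := HD k.
  case: (boolP (i \in F j)) => ij; first by left; apply: hj1.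
  case: (boolP (i \in F k)) => ik; first by right; apply: hk1.
  exfalso; move: mi; case: (leqP (bs j i) (bs k i)) => h.
    move=> E0; have := bj2 i ij; by rewrite E0 ltnn.
  move=> E0; have := bk2 i ik; by rewrite E0 ltnn.
- move=> i; apply: NNPP => H.
  have : i \in \bigcap_(j < r) F j.
    apply/bigcapP => j _; apply/negPn/negP => ni; apply: H; exists j.
    by case: (Hcf j) => [[_ [_ h]] _]; apply: h.
  by rewrite Hcap in_set0.
Qed.
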